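(* For every $\gamma\in[0,1)$, every $\epsilon\ge 0$, $\Delta\ge 0$ and every integer $k\ge 1$, there exist a deterministic MDP with discount factor $\gamma$ and $k+1$ states, an initial value $v_0$ with $\operatorname{span}(v_*-v_0)=\Delta$, error terms $\epsilon_1,\dots,\epsilon_{k-1}$ with $\operatorname{span}(\epsilon_j)\le\epsilon$, and a run of Approximate Value Iteration with these errors such that some policy $\pi_k$ greedy with respect to $v_{k-1}$ satisfies $$\|v_*-v_{\pi_k}\|_\infty = \frac{1}{1-\gamma}\left(\frac{\gamma-\gamma^k}{1-\gamma}\,\epsilon+\gamma^k\Delta\right).$$
   Context: A Markov Decision Process with finite state space $S$, finite action space $A$, reward function $r(s,a)$, transition probabilities $p(s'|s,a)$ and discount factor $\gamma\in[0,1)$. For a (deterministic, stationary) policy $\pi:S\to A$, let $r_\pi(s)=r(s,\pi(s))$, let $P_\pi$ be the stochastic matrix $P_\pi(s,s')=p(s'|s,\pi(s))$, and let $T_\pi v=r_\pi+\gamma P_\pi v$ be the Bellman operator of $\pi$; $v_\pi$ is its unique fixed point (the expected $\gamma$-discounted total reward of $\pi$). The Bellman optimality operator is $Tv=\max_\pi T_\pi v$ (componentwise), $v_*$ is its fixed point (the optimal value), and a policy $\pi$ is greedy with respect to $v$ if $T_\pi v=Tv$. For a function $f:S\to\mathbb R$, $\operatorname{span}(f)=\max_s f(s)-\min_s f(s)$. Approximate Value Iteration: starting from an arbitrary $v_0:S\to\mathbb R$, for $j\ge 0$ pick any policy $\pi_{j+1}$ greedy with respect to $v_j$ and set $v_{j+1}=T_{\pi_{j+1}}v_j+\epsilon_{j+1}$,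 where $\epsilon_{j+1}:S\to\mathbb R$ are arbitrary error terms. *)

(* Defs.v *)
From HB Require Import structures.
From mathcomp Require Import all_boot all_order all_algebra.
Set Implicit Arguments. Unset Strict Implicit. Unset Printing Implicit Defensive.
Import Order.TTheory GRing.Theory Num.Theory.
Local Open Scope ring_scope.

Section MDP.
Variables (R : realFieldType) (S A : finType).
(* r : reward, P s a s' = p(s'|s,a), g = discount factor *)
Variables (r : S -> A -> R) (P : S -> A -> S -> R) (g : R).

Definition is_kernel : Prop :=
  forall s a, (forall s', 0 <= P s a s') /\ \sum_(s' : S) P s a s' = 1.

Definition deterministic : Prop :=
  forall s a, exists s' : S, forall s'', P s a s'' = (s'' == s')%:R.

Definition Qval (v : S -> R) (s : S) (a : A) : R :=
  r s a + g * \sum_(s' : S) P s a s' * v s'.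

Definition Tpi (pi : S -> A) (v : S -> R) : S -> R := fun s => Qval v s (pi s).

(* w = T v, where (T v)(s) = max_pi (T_pi v)(s) = max_a Qval v s a *)
Definition is_Topt (v w : S -> R) : Prop :=
  forall s, (exists a, w s = Qval v s a) /\ (forall a, Qval v s a <= w s).

Definition greedy (pi : S -> A) (v : S -> R) : Prop :=
  forall s a, Qval v s a <= Tpi pi v s.

Definition is_value_of (pi : S -> A) (v : S -> R) : Prop := Tpi pi v = v.
Definition is_optimal_value (v : S -> R) : Prop := is_Topt v v.

Definition AVI_run (n : nat) (vs : nat -> S -> R) (pis : nat -> S -> A)
    (eps : nat -> S -> R) : Prop :=
  forall j, (j.+1 <= n)%N ->
    greedy (pis j.+1) (vs j) /\
    vs j.+1 = (fun s => Tpi (pis j.+1) (vs j) s + eps j.+1 s).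

End MDP.

(* span f = max_s f s - min_s f s = max_{s,t} (f s - f t) (0 for empty S) *)
Definition fspan (R : realFieldType) (S : finType) (f : S -> R) : R :=
  \big[Num.max/0]_(s : S) \big[Num.max/0]_(t : S) (f s - f t).

Definition supnorm (R : realFieldType) (S : finType) (f : S -> R) : R :=
  \big[Num.max/0]_(s : S) `|f s|.

(* Main.v *)
Require Import Defs.
From HB Require Import structures.
From mathcomp Require Import all_boot all_order all_algebra.
From mathcomp.algebra_tactics Require Import ring lra.
From mathcomp Require Import zify.
From Stdlib Require Import FunctionalExtensionality.
Import Order.TTheory GRing.Theory Num.Theory.
Local Open Scope ring_scope.

Lemma sum_dirac (R : realFieldType) (S : finType) (n : S) (v : S -> R) :
  \sum_(s' : S) (s' == n)%:R * v s' = v n.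
Proof.
rewrite (bigD1 n) //= eqxx mul1r big1 ?addr0 // => s' /negbTE ->; by rewrite mul0r.
Qed.

Lemma bigmax_le0 (R : realFieldType) (S : finType) (F : S -> R) (c : R) :
  0 <= c -> (forall s, F s <= c) -> \big[Num.max/0]_(s : S) F s <= c.
Proof.
move=> c0 H; apply: (big_ind (fun x => x <= c)) => //.
by move=> x y Hx Hy; rewrite ge_max Hx Hy.
Qed.

Lemma le_bigmax0 (R : realFieldType) (S : finType) (F : S -> R) (s : S) :
  F s <= \big[Num.max/0]_(s : S) F s.
Proof. by rewrite (bigD1 s) //= le_max lexx. Qed.

Fixpoint Dseq (R : realFieldType) (g eps Delta : R) (m : nat) : R :=
  if m is m'.+1 then eps + g * @Dseq R g eps Delta m' else Delta.

Lemma Dseq_ge0 (R : realFieldType) (g eps Delta : R) m :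
  0 <= g -> 0 <= eps -> 0 <= Delta -> 0 <= @Dseq R g eps Delta m.
Proof.
move=> g0 e0 d0; elim: m => //= m IH; by rewrite addr_ge0 // mulr_ge0.
Qed.

Lemma Dseq_closed (R : realFieldType) (g eps Delta : R) m :
  g != 1 -> @Dseq R g eps Delta m = (1 - g ^+ m) / (1 - g) * eps + g ^+ m * Delta.
Proof.
move=> g1; have h : 1 - g != 0 by rewrite subr_eq0 eq_sym.
elim: m => [|m IH] /=; first by rewrite expr0 subrr mul0r mul0r add0r mul1r.
by rewrite IH exprS; field.
Qed.

Definition nxt (k : nat) (s : 'I_k.+1) (a : bool) : 'I_k.+1 :=
  if a && (val s == k) then s else inord (val s).-1.

Arguments nxt {k}.

Lemma val_nxt_f (k : nat) (s : 'I_k.+1) : val (nxt s false) = (val s).-1.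
Proof. rewrite /nxt /= inordK //; have := ltn_ord s; lia. Qed.

Theorem proposition1 (R : realFieldType) (g eps Delta : R) (k : nat) :
  0 <= g -> g < 1 -> 0 <= eps -> 0 <= Delta -> (1 <= k)%N ->
  exists (S A : finType) (r : S -> A -> R) (P : S -> A -> S -> R),
    #|S| = k.+1 /\ is_kernel P /\ deterministic P /\
    exists (vstar v0 : S -> R) (errs : nat -> S -> R)
           (vs : nat -> S -> R) (pis : nat -> S -> A) (pik : S -> A)
           (vpik : S -> R),
      is_optimal_value r P g vstar /\
      fspan (fun s => vstar s - v0 s) = Delta /\
      (forall j, (1 <= j <= k.-1)%N -> fspan (errs j) <= eps) /\
      vs 0%N = v0 /\
      AVI_run r P g k.-1 vs pis errs /\
      greedy r P g pik (vs k.-1) /\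
      is_value_of r P g pik vpik /\
      supnorm (fun s => vstar s - vpik s) =
        (1 - g)^-1 * ((g - g ^+ k) / (1 - g) * eps + g ^+ k * Delta).
Proof.
move=> g0 g1 e0 d0 k1.
set D := @Dseq R g eps Delta.
have Dge0 m : 0 <= D m by apply: Dseq_ge0.
set c := g * D k.-1.
have c0 : 0 <= c by rewrite mulr_ge0.
pose rw (s : 'I_k.+1) (a : bool) : R := if a && (val s == k) then - c else 0.
pose P (s : 'I_k.+1) (a : bool) (s' : 'I_k.+1) : R := (s' == nxt s a)%:R.
have QE v s a : Qval rw P g v s a = rw s a + g * v (nxt s a).
  by rewrite /Qval /P sum_dirac.
exists ('I_k.+1 : finType), (bool : finType), rw, P.
split; first by rewrite card_ord.
split.
  move=> s a; split=> [s'|]; first by rewrite /P ler0n.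
  have := @sum_dirac R _ (nxt s a) (fun _ : 'I_k.+1 => (1 : R)).
  by under eq_bigr do rewrite mulr1.
split; first by move=> s a; exists (nxt s a).
pose vs (j : nat) (s : 'I_k.+1) : R := D j * (val s == j.+1)%:R.
pose errs (j : nat) (s : 'I_k.+1) : R := eps * (val s == j.+1)%:R.
pose vpik (s : 'I_k.+1) : R := if val s == k then - c / (1 - g) else 0.
exists (fun _ => 0), (vs 0%N), errs, vs, (fun _ _ => false),
  (fun s => val s == k), vpik.
have g1' : 1 - g != 0 by rewrite subr_eq0 eq_sym lt_eqF.
have vsge0 j s : 0 <= vs j s by rewrite /vs mulr_ge0.
split.
  move=> s; split.
    by exists false; rewrite QE /rw /= mulr0 addr0.
  by move=> a; rewrite QE /rw mulr0 addr0; case: ifP => _; lra.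
split.
  apply/eqP; rewrite eq_le; apply/andP; split.
    apply: bigmax_le0 => // s; apply: bigmax_le0 => // t.
    rewrite /vs /D /=.
    by case: (val s == 1)%N; case: (val t == 1)%N; rewrite /= ?mulr1 ?mulr0; lra.
  rewrite /fspan; apply: (le_trans _ (@le_bigmax0 _ _ _ ord0)); apply: (le_trans _ (@le_bigmax0 _ _ _ (inord 1))).
  rewrite /vs /D /= inordK; last lia.
  by rewrite /= mulr1 mulr0; lra.
split.
  move=> j _; apply: bigmax_le0 => // s; apply: bigmax_le0 => // t.
  rewrite /errs.
  by case: (val s == j.+1)%N; case: (val t == j.+1)%N; rewrite /= ?mulr1 ?mulr0; lra.
split; first by [].
split.
  move=> j hj; split.
    move=> s a; rewrite /Tpi !QE.
    case: a; last exact: lexx.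
    rewrite /rw /nxt /=.
    case E: (val s == k) => /=; last exact: lexx.
    have -> : vs j s = 0.
      have hs : nat_of_ord s = k by apply/eqP. rewrite /vs /= hs; have -> : (k == j.+1) = false by lia.
      by rewrite mulr0.
    have := mulr_ge0 g0 (vsge0 j (inord (nat_of_ord s).-1)); lra.
  apply: functional_extensionality => s.
  rewrite /Tpi QE /rw /= /vs val_nxt_f /errs.
  have -> : ((val s).-1 == j.+1) = (val s == j.+2) by case: (val s) => [|[|n]].
  rewrite /D /=.
  by case: (val s == j.+2)%N; rewrite /= ?mulr1 ?mulr0; ring.
split.
  move=> s a; rewrite /Tpi !QE.
  case E: (val s == k).
    move/eqP: E => hs.
    case: a; rewrite /rw /nxt /vs /= hs eqxx /=.
    exact: lexx.
    have hs' : nat_of_ord s = k := hs.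
    rewrite inordK; last lia.
    rewrite hs'.
    have -> : (k.-1 == k.-1.+1) = false by lia.
    have -> : (k == k.-1.+1) = true by lia.
    rewrite /c /= mulr0 mulr1 mulr0; lra.
  rewrite /rw /nxt /= E /=.
  by case: a; rewrite /= ?E /=; exact: lexx.
split.
  apply: functional_extensionality => s.
  rewrite /Tpi QE /rw /vpik /nxt.
  case E: (val s == k) => /=; rewrite ?E /=.
    by field.
  rewrite inordK; last (have := ltn_ord s; lia).
  have hE : (nat_of_ord s == k) = false := E.
  have -> : ((nat_of_ord s).-1 == k) = false by (have := ltn_ord s; lia).
  by rewrite mulr0 addr0.
have cE : c / (1 - g) = (1 - g)^-1 * ((g - g ^+ k) / (1 - g) * eps + g ^+ k * Delta).
  rewrite /c /D Dseq_closed; last by rewrite lt_eqF.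
  have key m : g * ((1 - g ^+ m) / (1 - g) * eps + g ^+ m * Delta) / (1 - g) =
     (1 - g)^-1 * ((g - g ^+ m.+1) / (1 - g) * eps + g ^+ m.+1 * Delta).
    by rewrite exprS; field.
  by rewrite key prednK.
rewrite -cE.
have cg : 0 <= c / (1 - g) by rewrite divr_ge0 // subr_ge0 ltW.
apply/eqP; rewrite eq_le; apply/andP; split.
  apply: bigmax_le0 => // s; rewrite /vpik.
  case: (val s == k); rewrite /= ?subr0 ?sub0r ?normrN ?normr0 //.
  by rewrite mulNr normrN ger0_norm.
rewrite /supnorm; apply: (le_trans _ (@le_bigmax0 _ _ _ ord_max)).
by rewrite /vpik /= eqxx sub0r mulNr opprK ger0_norm.
Qed.
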